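(* Let $\mathcal H^1_{\mathrm{TT}}=(C,F^1,D,G)$ satisfy the Hybrid Basic Conditions, let $(\Phi,\{H_k\}_{k=1}^\infty)$ with $\Phi=(\phi_s,\phi_f)$ and $H_k=(h_{s,k},h_{f,k})$ be a two-timescale asymptotic simulation of $\mathcal H^1_{\mathrm{TT}}$, and let $\Lambda:\mathbb R^{n_s}\rightrightarrows\mathbb R^{n_f}$ have compact graph with $\omega(\Phi)\subset\mathrm{gph}(\Lambda)$. Then $(\phi_s,\{h_{s,k}\}_{k=1}^\infty)$ is an asymptotic simulation of the reduced system $\mathcal H^\Lambda_{\mathrm R}$.
   Context: Hybrid inclusions. A hybrid inclusion $\mathcal H=(C,F,D,G)$ on $\mathbb R^n$ consists of sets $C,D\subset\mathbb R^n$ and set-valued maps $F,G:\mathbb R^n\rightrightarrows\mathbb R^n$ ($x\in C,\ \dot x\in F(x)$; $x\in D,\ x^+\in G(x)$). It satisfies the Hybrid Basic Conditions if $C,D$ are closed; $F,G$ are outer semicontinuous and locally bounded; $F(x)$ is nonempty and convex for every $x\in C$; $G(x)$ is nonempty for every $x\in D$. $F_C(x):=F(x)$ for $x\in C$, $\emptyset$ otherwise; $G_D$ analogously. Hybrid sequences. A compact hybrid sequence domain is $\bigcup_{j=0}^{J-1}(\{k_j,\dots,k_{j+1}\}\times\{j\})$ with $J\in\mathbb N$, integers $0=k_0\le\dots\le k_J$; a hybrid sequence domain is a union of a nondecreasing sequence of such sets; a hybrid sequence is a map on a hybrid sequence domain; complete = unbounded domain; complete in the $k$- (resp. $j$-)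 direction = set of $k$'s (resp. $j$'s) in the domain unbounded. $\bar\jmath_k:=\inf\{j:(k+1,j)\in\mathrm{dom}\,\phi\}$, $\bar k_j:=\inf\{k:(k,j+1)\in\mathrm{dom}\,\phi\}$. $\limsup$ of a sequence = set of its accumulation points. $\omega(\phi)$ = set of all $\lim_i\phi(k_i,j_i)$ with $(k_i,j_i)\in\mathrm{dom}\,\phi$, $k_i+j_i\to\infty$. Asymptotic simulations. $\{h_k\}$ is admissible if $h_k>0$, $h_k\to0$, $\sum h_k=\infty$; $\tau_k:=\sum_{i=0}^{k-1}h_{i+1}$, $m(t):=\max\{k:\tau_k\le t\}$. $(\phi,\{h_k\})$ is an asymptotic simulation of $\mathcal H$ if $\phi$ is a bounded complete hybrid sequence, $\{h_k\}$ is admissible, and: (1) if $\phi$ is complete in the $k$-direction, there is a bounded sequence $\{f_k\}_{k\ge0}$ with $\limsup_{k}(\phi(k,\bar\jmath_k),f_k)\subset\mathrm{gph}(F_C)$ and, with $\hat f_{k+1}:=(\phi(k+1,\bar\jmath_k)-\phi(k,\bar\jmath_k))/h_{k+1}$, for each $T>0$, $\lim_{n\to\infty}\sup_{n+1\le k\le m(\tau_n+T)}|\sum_{i=n}^{k-1}h_{i+1}(\hat f_{i+1}-f_i)|=0$; (2) if $\phi$ is complete in the $j$-direction, $\limsup_{j}(\phi(\bar k_j,j),\phi(\bar k_j,j+1))\subset\mathrm{gph}(G_D)$. Two-timescale setting. $n=n_s+n_f$, $x=(x_s,x_f)$. $\mathcal H^1_{\mathrm{TT}}=(C,F^1,D,G)$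 with $C,D\subset\mathbb R^n$, $F_s:\mathbb R^n\rightrightarrows\mathbb R^{n_s}$, $F_f:\mathbb R^n\rightrightarrows\mathbb R^{n_f}$, $F^1(x):=F_s(x)\times F_f(x)$, $G:\mathbb R^n\rightrightarrows\mathbb R^n$. $\{H_k\}$, $H_k=(h_{s,k},h_{f,k})\in\mathbb R^2_{>0}$, is two-timescale admissible if both component sequences are admissible and $h_{s,k}/h_{f,k}\to0$. For $r\in\{s,f\}$: $\tau_{r,k}:=\sum_{i=0}^{k-1}h_{r,i+1}$, $m_r(t):=\max\{k:\tau_{r,k}\le t\}$, $\mathcal I_{r,n,T}:=\{k:n+1\le k\le m_r(\tau_{r,n}+T)\}$. $(\Phi,\{H_k\})$ is a two-timescale asymptotic simulation of $\mathcal H^1_{\mathrm{TT}}$ if $\Phi=(\phi_s,\phi_f)$ is a bounded complete hybrid sequence, $\{H_k\}$ is two-timescale admissible, and: (1) if $\Phi$ is complete in the $k$-direction, there is a bounded sequence $f_k=(f_{s,k},f_{f,k})$ with $\limsup_k(\Phi(k,\bar\jmath_k),f_k)\subset\mathrm{gph}(F^1_C)$ and, with $\hat f_{r,k+1}:=(\phi_r(k+1,\bar\jmath_k)-\phi_r(k,\bar\jmath_k))/h_{r,k+1}$, for all $T>0$ and $r\in\{s,f\}$, $\lim_{n\to\infty}\sup_{k\in\mathcal I_{r,n,T}}|\sum_{i=n}^{k-1}h_{r,i+1}(\hat f_{r,i+1}-f_{r,i})|=0$; (2) if $\Phi$ is complete in the $j$-direction, $\limsup_j(\Phi(\bar k_j,j),\Phi(\bar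 k_j,j+1))\subset\mathrm{gph}(G_D)$. Reduced system. Given $\Lambda:\mathbb R^{n_s}\rightrightarrows\mathbb R^{n_f}$, define $\Lambda^C_{\mathrm R},\Lambda^D_{\mathrm R}:\mathbb R^{n_s}\rightrightarrows\mathbb R^{n_f}$ by $\mathrm{gph}(\Lambda^C_{\mathrm R}):=\mathrm{gph}(\Lambda)\cap C$ and $\mathrm{gph}(\Lambda^D_{\mathrm R}):=\mathrm{gph}(\Lambda)\cap D$. Set $C^\Lambda_{\mathrm R}:=\mathrm{dom}(\Lambda^C_{\mathrm R})$, $D^\Lambda_{\mathrm R}:=\mathrm{dom}(\Lambda^D_{\mathrm R})$, $F^\Lambda_{\mathrm R}(x_s):=\overline{\mathrm{co}}\{f_s\in\mathbb R^{n_s}:f_s\in F_s(x_s,x_f),\ x_f\in\Lambda^C_{\mathrm R}(x_s)\}$ (closed convex hull), and, with $G_s(x_s,x_f):=\mathrm{proj}_{\mathbb R^{n_s}}G(x_s,x_f)$, $G^\Lambda_{\mathrm R}(x_s):=\{g_s:g_s\in G_s(x_s,x_f),\ x_f\in\Lambda^D_{\mathrm R}(x_s)\}$. The reduced system is the hybrid inclusion $\mathcal H^\Lambda_{\mathrm R}$ on $\mathbb R^{n_s}$ with data $(C^\Lambda_{\mathrm R},F^\Lambda_{\mathrm R},D^\Lambda_{\mathrm R},G^\Lambda_{\mathrm R})$. *)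

(* Defs.v *)
From HB Require Import structures.
From mathcomp Require Import all_boot all_order all_algebra.
From mathcomp Require Import all_classical all_reals all_analysis.
Set Implicit Arguments. Unset Strict Implicit. Unset Printing Implicit Defensive.
Import Order.TTheory GRing.Theory Num.Theory.
Import numFieldNormedType.Exports.
Local Open Scope classical_set_scope.
Local Open Scope ring_scope.

Section Hybrid.
Variable R : realType.

Section SetValued.
Variables (U V : normedModType R).

Definition osc (F : U -> set V) : Prop :=
  forall (x : U) (y : V) (xs : nat -> U) (ys : nat -> V),
    xs @ \oo --> x -> ys @ \oo --> y -> (forall i, F (xs i) (ys i)) -> F x y.

Definition locally_bounded (F : U -> set V) : Prop :=
  forall x : U, exists W, nbhs x W /\ bounded_set (\bigcup_(z in W) F z).

Definition restrict (C : set U) (F : U -> set V) : U -> set V :=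
  fun x y => C x /\ F x y.

Definition gph (F : U -> set V) : set (U * V) := [set p | F p.1 p.2].

End SetValued.

Definition convex_in (V : normedModType R) (A : set V) : Prop :=
  @convex_set R V A.

Definition clconv (V : normedModType R) (A : set V) : set V :=
  \bigcap_(B in [set B : set V | A `<=` B /\ closed B /\ convex_in B]) B.

Definition HBC (V : normedModType R) (C : set V) (F : V -> set V)
  (D : set V) (G : V -> set V) : Prop :=
  [/\ closed C /\ closed D,
      osc F /\ locally_bounded F,
      osc G /\ locally_bounded G,
      (forall x, C x -> F x !=set0 /\ convex_in (F x)) &
      (forall x, D x -> G x !=set0)].

Definition compact_hsd (E : set (nat * nat)) : Prop :=
  exists (J : nat) (k : nat -> nat),
    k 0%N = 0%N /\ (forall j, (j < J)%N -> (k j <= k j.+1)%N) /\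
    E = [set p | (p.2 < J)%N /\ (k p.2 <= p.1 <= k p.2.+1)%N].

Definition hsd (E : set (nat * nat)) : Prop :=
  exists Es : nat -> set (nat * nat),
    (forall i, compact_hsd (Es i)) /\ (forall i, Es i `<=` Es i.+1) /\
    E = \bigcup_i Es i.

(* a hybrid sequence is a pair (E, phi) with hsd E, phi defined on E *)
Definition hs_bounded (V : normedModType R) (E : set (nat * nat))
  (phi : nat -> nat -> V) : Prop :=
  bounded_set [set phi p.1 p.2 | p in E].

Definition complete (E : set (nat * nat)) : Prop :=
  forall N, exists p, E p /\ (N <= p.1 + p.2)%N.
Definition complete_k (E : set (nat * nat)) : Prop :=
  forall N, exists k j, E (k, j) /\ (N <= k)%N.
Definition complete_j (E : set (nat * nat)) : Prop :=
  forall N, exists k j, E (k, j) /\ (N <= j)%N.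

(* infimum of a nonempty set of naturals (0 if empty; never used then) *)
Definition nat_inf (P : set nat) : nat :=
  xget 0%N [set n | P n /\ forall m, P m -> (n <= m)%N].

Definition jbar (E : set (nat * nat)) (k : nat) : nat := nat_inf [set j | E (k.+1, j)].
Definition kbar (E : set (nat * nat)) (j : nat) : nat := nat_inf [set k | E (k, j.+1)].

Definition seq_limsup (T : topologicalType) (u : nat -> T) : set T :=
  [set y | forall W, nbhs y W -> forall N, exists n, (N <= n)%N /\ W (u n)].

Definition omega (V : normedModType R) (E : set (nat * nat))
  (phi : nat -> nat -> V) : set V :=
  [set y | exists ks js : nat -> nat,
     (forall i, E (ks i, js i)) /\
     (forall N, exists M, forall i, (M <= i)%N -> (N <= ks i + js i)%N) /\
     (fun i => phi (ks i) (js i)) @ \oo --> y].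

(* a step-size sequence {h_k}_{k>=1} is represented by h : nat -> R; h 0 is unused *)
Definition admissible (h : nat -> R) : Prop :=
  [/\ forall k, 0 < h k.+1, h @ \oo --> 0 &
      (fun n => \sum_(i < n) h i.+1) @ \oo --> +oo].

Definition tau (h : nat -> R) (k : nat) : R := \sum_(i < k) h i.+1.

Definition mt (h : nat -> R) (t : R) : nat :=
  xget 0%N [set k | tau h k <= t /\ forall k', tau h k' <= t -> (k' <= k)%N].

Definition Iset (h : nat -> R) (n : nat) (T : R) : set nat :=
  [set k | (n.+1 <= k)%N /\ (k <= mt h (tau h n + T))%N].

(* hat f_{k+1} := (phi(k+1, jbar_k) - phi(k, jbar_k)) / h_{k+1}; fhat k denotes hat f_{k+1} *)
Definition fhat (V : normedModType R) (E : set (nat * nat))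
  (phi : nat -> nat -> V) (h : nat -> R) (k : nat) : V :=
  (h k.+1)^-1 *: (phi k.+1 (jbar E k) - phi k (jbar E k)).

Definition sum_condition (V : normedModType R) (E : set (nat * nat))
  (phi : nat -> nat -> V) (h : nat -> R) (f : nat -> V) : Prop :=
  forall T : R, 0 < T ->
    forall e : R, 0 < e -> exists N, forall n, (N <= n)%N ->
      forall k, Iset h n T k ->
        `| \sum_(n <= i < k) h i.+1 *: (fhat E phi h i - f i) | <= e.

Definition asym_sim (V : normedModType R) (C : set V) (F : V -> set V)
  (D : set V) (G : V -> set V)
  (E : set (nat * nat)) (phi : nat -> nat -> V) (h : nat -> R) : Prop :=
  [/\ hsd E /\ hs_bounded E phi, complete E, admissible h,
      (complete_k E -> exists f : nat -> V,
          bounded_set (range f) /\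
          seq_limsup (fun k => (phi k (jbar E k), f k)) `<=` gph (restrict C F) /\
          sum_condition E phi h f) &
      (complete_j E ->
          seq_limsup (fun j => (phi (kbar E j) j, phi (kbar E j) j.+1))
            `<=` gph (restrict D G))].

Definition F1 (Vs Vf : normedModType R) (Fs : Vs * Vf -> set Vs)
  (Ff : Vs * Vf -> set Vf) : Vs * Vf -> set (Vs * Vf) :=
  fun x => Fs x `*` Ff x.

Definition tt_admissible (hs hf : nat -> R) : Prop :=
  [/\ admissible hs, admissible hf & (fun k => hs k / hf k) @ \oo --> 0].

Definition tt_asym_sim (Vs Vf : normedModType R) (C : set (Vs * Vf))
  (Fs : Vs * Vf -> set Vs) (Ff : Vs * Vf -> set Vf)
  (D : set (Vs * Vf)) (G : Vs * Vf -> set (Vs * Vf))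
  (E : set (nat * nat)) (Phi : nat -> nat -> Vs * Vf) (hs hf : nat -> R) : Prop :=
  [/\ hsd E /\ hs_bounded E Phi, complete E, tt_admissible hs hf,
      (complete_k E -> exists (fs : nat -> Vs) (ff : nat -> Vf),
          bounded_set (range (fun k => (fs k, ff k))) /\
          seq_limsup (fun k => (Phi k (jbar E k), (fs k, ff k)))
             `<=` gph (restrict C (F1 Fs Ff)) /\
          sum_condition E (fun k j => (Phi k j).1) hs fs /\
          sum_condition E (fun k j => (Phi k j).2) hf ff) &
      (complete_j E ->
          seq_limsup (fun j => (Phi (kbar E j) j, Phi (kbar E j) j.+1))
            `<=` gph (restrict D G))].

Section Reduced.
Variables (Vs Vf : normedModType R).
Variables (C D : set (Vs * Vf)) (Fs : Vs * Vf -> set Vs) (G : Vs * Vf -> set (Vs * Vf)).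
Variable Lam : Vs -> set Vf.

Definition LamC : Vs -> set Vf := fun xs xf => Lam xs xf /\ C (xs, xf).
Definition LamD : Vs -> set Vf := fun xs xf => Lam xs xf /\ D (xs, xf).
Definition CR : set Vs := [set xs | exists xf, LamC xs xf].
Definition DR : set Vs := [set xs | exists xf, LamD xs xf].
Definition FR : Vs -> set Vs := fun xs =>
  clconv [set fs | exists xf, LamC xs xf /\ Fs (xs, xf) fs].
Definition Gs : Vs * Vf -> set Vs := fun x => [set p.1 | p in G x].
Definition GR : Vs -> set Vs := fun xs =>
  [set gs | exists xf, LamD xs xf /\ Gs (xs, xf) gs].
End Reduced.

End Hybrid.

(* Main.v *)
Require Import Defs.
From mathcomp Require Import all_boot all_order all_algebra.
From mathcomp Require Import all_classical all_reals all_analysis.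
Import Order.TTheory GRing.Theory Num.Theory.
Import numFieldNormedType.Exports.
Local Open Scope classical_set_scope.
Local Open Scope ring_scope.
Set Implicit Arguments. Unset Strict Implicit.

Lemma nat_infP (P : set nat) : (exists n, P n) ->
  P (nat_inf P) /\ forall m, P m -> (nat_inf P <= m)%N.
Proof.
move=> [n Pn].
have ex : exists n, `[< P n >] by exists n; apply/asboolP.
rewrite /nat_inf; apply: (xgetPex 0%N (P := [set n | P n /\ forall m, P m -> (n <= m)%N])).
case: (ex_minnP ex) => k /asboolP Pk kmin; exists k; split => // m Pm.
by apply: kmin; apply/asboolP.
Qed.

Lemma bigcupI (Es : nat -> set (nat * nat)) i x : Es i x -> (\bigcup_i Es i) x.
Proof. by move=> h; exists i. Qed.

Lemma find_block (s : nat -> nat) (J x m : nat) :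
  (s 0%N <= x)%N -> (x <= s m.+1)%N -> (m < J)%N ->
  exists j, [/\ (j < J)%N, (s j <= x)%N & (x <= s j.+1)%N].
Proof.
elim: m => [|m IH] h0 h1 hJ; first by exists 0%N.
case: (leqP x (s m.+1)) => hx.
  by apply: IH => //; apply: ltnW.
by exists m.+1; split => //; apply: ltnW.
Qed.

Lemma jbar_mem (E : set (nat * nat)) k :
  hsd E -> complete_k E -> E (k.+1, jbar E k) /\ E (k, jbar E k).
Proof.
move=> [Es [cEs [incEs ->]]] ck.
have ex : exists j, (\bigcup_i Es i) (k.+1, j).
  have [K [j0 [[i _ Hi] HK]]] := ck k.+1.
  have [J [s [s0 [smono eqE]]]] := cEs i.
  move: Hi; rewrite eqE /= => -[j0J /andP[h1 h2]].
  have s0k : (s 0%N <= k.+1)%N by rewrite s0.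
  have [j [jJ a b]] := find_block s0k (leq_trans HK h2) j0J.
  by exists j; exists i => //; rewrite eqE /=; split => //; apply/andP.
have [Pj jmin] := nat_infP ex.
split => //.
rewrite /jbar in Pj jmin *.
set j := nat_inf _ in Pj jmin *.
case: Pj => i _; have [J [s [s0 [smono eqE]]]] := cEs i.
rewrite {1}eqE /= => -[jJ /andP[h1 h2]].
case: (leqP (s j) k) => hk.
  by apply: (@bigcupI Es i); rewrite eqE /=; split => //; rewrite hk /= ltnW.
have sj : s j = k.+1 by apply/eqP; rewrite eqn_leq h1 hk.
case: j jmin jJ h1 h2 hk sj => [|j] jmin jJ h1 h2 hk sj.
  by move: sj; rewrite s0.
have : (j.+1 <= j)%N; last by rewrite ltnn.
apply: jmin; apply: (@bigcupI Es i); rewrite eqE /=; split; first exact: ltnW.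
by rewrite -sj smono ?(ltnW jJ) //= leqnn.
Qed.

Lemma kbar_mem (E : set (nat * nat)) j :
  hsd E -> complete_j E -> E (kbar E j, j.+1) /\ E (kbar E j, j).
Proof.
move=> [Es [cEs [incEs ->]]] cj.
have ex : exists k, (\bigcup_i Es i) (k, j.+1).
  have [K [j0 [[i _ Hi] HK]]] := cj j.+1.
  have [J [s [s0 [smono eqE]]]] := cEs i.
  move: Hi; rewrite eqE /= => -[j0J /andP[h1 h2]].
  exists (s j.+1); exists i => //; rewrite eqE /=; split.
    exact: leq_ltn_trans HK j0J.
  by rewrite leqnn smono //; apply: leq_ltn_trans HK j0J.
have [Pk kmin] := nat_infP ex.
split => //.
rewrite /kbar in Pk kmin *.
set k := nat_inf _ in Pk kmin *.
case: Pk => i _; have [J [s [s0 [smono eqE]]]] := cEs i.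
rewrite {1}eqE /= => -[jJ /andP[h1 h2]].
case: (leqP k (s j.+1)) => hk.
  have ek : k = s j.+1 by apply/eqP; rewrite eqn_leq hk h1.
  apply: (@bigcupI Es i); rewrite eqE /=; split; first exact: ltnW.
  by rewrite ek leqnn smono //; apply: ltnW.
case: k kmin jJ h1 h2 hk => [|k] kmin jJ h1 h2 hk; first by [].
have : (k.+1 <= k)%N; last by rewrite ltnn.
apply: kmin; apply: (@bigcupI Es i); rewrite eqE /=; split => //.
by rewrite -ltnS hk /= (leq_trans (leqnSn k) h2).
Qed.
Section Topo.
Variable R : realType.

Lemma bnd_get (V : normedModType R) (A : set V) :
  bounded_set A -> exists M : R, forall x, A x -> `|x| <= M.
Proof.
move=> [M [Mreal h]]; exists (M + 1) => x Ax; apply: (h (M + 1)) => //.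
by rewrite ltrDl.
Qed.

Lemma cball_bnd n (M : R) : bounded_set (closed_ball_ Num.norm (0 : 'rV[R]_n) M).
Proof.
exists M; split; first exact: num_real.
move=> x Mx y; rewrite /closed_ball_ /= sub0r normrN => h.
exact: le_trans h (ltW Mx).
Qed.

Lemma cpt_of_bnd n m (A : set ('rV[R]_n * 'rV[R]_m)) :
  bounded_set A -> exists K, compact K /\ A `<=` K.
Proof.
move=> /bnd_get[M hM].
exists (closed_ball_ Num.norm (0 : 'rV[R]_n) M `*` closed_ball_ Num.norm (0 : 'rV[R]_m) M).
split.
  apply: compact_setX; apply: bounded_closed_compact;
    (exact: cball_bnd || exact: closed_closed_ball_).
move=> x /hM; rewrite prod_normE ge_max => /andP[h1 h2].
by split; rewrite /closed_ball_ /= sub0r normrN.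
Qed.

Lemma extract (V : normedModType R) (u : nat -> V) y :
  seq_limsup u y -> exists sg : nat -> nat,
    (forall i, (i <= sg i)%N) /\ (u \o sg) @ \oo --> y.
Proof.
move=> hy.
have h : forall i, exists n, (i <= n)%N /\ ball y (i.+1%:R^-1) (u n).
  move=> i; apply: hy; apply: nbhsx_ballx; by rewrite invr_gt0.
have [sg hsg] := choice h.
exists sg; split; first by move=> i; case: (hsg i).
apply/cvg_ballP => e e0.
have := near_infty_natSinv_lt (PosNum e0).
move=> [N _ HN]; exists N => // i /= Ni.
case: (hsg i) => _; apply: le_ball; apply: ltW; exact: HN.
Qed.

Lemma subseq_cvg (T : topologicalType) (v : nat -> T) (sg : nat -> nat) (y : T) :
  (forall i, (i <= sg i)%N) -> v @ \oo --> y -> (v \o sg) @ \oo --> y.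
Proof.
move=> hsg hv.
have hs : sg @ \oo --> \oo.
  move=> P [N _ HP]; exists N => // i /= Ni; apply: HP.
  exact: leq_trans Ni (hsg i).
exact: (cvg_comp sg v hs hv).
Qed.

Lemma limsup_of_sub (T : topologicalType) (u : nat -> T) (sg : nat -> nat) (p : T) :
  (forall i, (i <= sg i)%N) -> (u \o sg) @ \oo --> p -> seq_limsup u p.
Proof.
move=> hsg hc W Wp N.
have := hc W Wp; move=> [M _ HM].
exists (sg (maxn M N)); split.
  exact: leq_trans (leq_maxr M N) (hsg _).
by apply: HM; rewrite /= leq_maxl.
Qed.

Lemma cluster_of_cpt (T : topologicalType) (u : nat -> T) (K : set T) :
  compact K -> (forall n, K (u n)) -> exists p, K p /\ seq_limsup u p.
Proof.
move=> cK Ku.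
have FK : (u @ \oo) K by exists 0%N => // n _; apply: Ku.
have [p [Kp clp]] := cK (u @ \oo) _ FK.
exists p; split => // W Wp N.
have FA : (u @ \oo) [set x | exists n, (N <= n)%N /\ x = u n].
  by exists N => // n /= Nn; exists n.
have [x [[n [Nn ->]] Wx]] := clp _ _ FA Wp.
by exists n.
Qed.

Lemma cvg_fst' (T : Type) (U V : topologicalType) (F : set_system T) {FF : Filter F}
  (f : T -> U * V) (a : U * V) : f @ F --> a -> (fun t => (f t).1) @ F --> a.1.
Proof. by case: a => a b h; exact: (cvg_comp f fst h cvg_fst). Qed.

Lemma cvg_snd' (T : Type) (U V : topologicalType) (F : set_system T) {FF : Filter F}
  (f : T -> U * V) (a : U * V) : f @ F --> a -> (fun t => (f t).2) @ F --> a.2.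
Proof. by case: a => a b h; exact: (cvg_comp f snd h cvg_snd). Qed.


Lemma lim_eq (V : normedModType R) (f : nat -> V) (a b : V) :
  f @ \oo --> a -> f @ \oo --> b -> a = b.
Proof. move=> ha hb; apply: (@cvg_unique V (@norm_hausdorff _ V) (f @ \oo) _ a b ha hb). Qed.

Lemma key (A B C' D' : normedModType R) (u : nat -> (A * B) * (C' * D'))
  (K : set ((A * B) * (C' * D'))) (y : A * C') :
  compact K -> (forall n, K (u n)) ->
  seq_limsup (fun n => ((u n).1.1, (u n).2.1)) y ->
  exists (p : (A * B) * (C' * D')) (sg : nat -> nat), [/\ p.1.1 = y.1, p.2.1 = y.2, (forall i, (i <= sg i)%N) &
    (u \o sg) @ \oo --> p].
Proof.
move=> cK Ku hy.
have [s1 [hs1 c1]] := extract hy.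
have [p [_ lp]] := cluster_of_cpt (u := u \o s1) cK (fun n => Ku _).
have [s2 [hs2 c2]] := extract lp.
have hs : forall i, (i <= s1 (s2 i))%N by move=> i; exact: leq_trans (hs2 i) (hs1 _).
have c3 := subseq_cvg hs2 c1.
exists p, (s1 \o s2); split => //.
- apply: (lim_eq (f := fun t => (u (s1 (s2 t))).1.1)).
    exact: (cvg_fst' (cvg_fst' c2)).
  exact: (cvg_fst' c3).
- apply: (lim_eq (f := fun t => (u (s1 (s2 t))).2.1)).
    exact: (cvg_fst' (cvg_snd' c2)).
  exact: (cvg_snd' c3).
Qed.

End Topo.

Lemma fst_norm (R : realType) (U V : normedModType R) (x : U * V) : `|x.1| <= `|x|.
Proof. by rewrite prod_normE le_max lexx. Qed.

Theorem theorem2 (R : realType) (ns nf : nat)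
  (C D : set ('rV[R]_ns * 'rV[R]_nf))
  (Fs : 'rV[R]_ns * 'rV[R]_nf -> set 'rV[R]_ns)
  (Ff : 'rV[R]_ns * 'rV[R]_nf -> set 'rV[R]_nf)
  (G : 'rV[R]_ns * 'rV[R]_nf -> set ('rV[R]_ns * 'rV[R]_nf))
  (E : set (nat * nat)) (Phi : nat -> nat -> 'rV[R]_ns * 'rV[R]_nf)
  (hs hf : nat -> R) (Lam : 'rV[R]_ns -> set 'rV[R]_nf) :
  HBC C (F1 Fs Ff) D G ->
  tt_asym_sim C Fs Ff D G E Phi hs hf ->
  compact (gph Lam) ->
  omega E Phi `<=` gph Lam ->
  asym_sim (CR C Lam) (FR C Fs Lam) (DR D Lam) (GR D G Lam)
    E (fun k j => (Phi k j).1) hs.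
Proof.
move=> _ [[hsdE bndE] cE [ads adf _] hk hj] cL omL.
have [K1 [cK1 sK1]] := cpt_of_bnd bndE.
have K1P : forall k j, E (k, j) -> K1 (Phi k j).
  by move=> k j Ekj; apply: sK1; exists (k, j).
split => //.
- split => //.
  have [M hM] := bnd_get bndE.
  exists M; split; first exact: num_real.
  move=> x Mx _ [q Eq <-].
  apply: le_trans (fst_norm _) _; apply: le_trans (ltW Mx).
  by apply: hM; exists q.
- move=> ck; have [fs [ff [bf [ls [sc1 sc2]]]]] := hk ck.
  exists fs; split.
    have [M hM] := bnd_get bf.
    exists M; split; first exact: num_real.
    move=> x Mx _ [k _ <-].
    apply: le_trans (ltW Mx).
    apply: le_trans (fst_norm (fs k, ff k)) _; apply: hM; by exists k.
  split => //.
  have [K2 [cK2 sK2]] := cpt_of_bnd bf.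
  move=> [xs v] hv.
  have := key (u := fun k => (Phi k (jbar E k), (fs k, ff k))) (y := (xs, v))
    (compact_setX cK1 cK2) _ hv.
  case.
    move=> n; split => /=; first by apply: K1P; case: (jbar_mem n hsdE ck).
    by apply: sK2; exists n.
  move=> [[a b] [c d]] [sg [/= e1 e2 hsg cv]]; subst a c.
  have := ls _ (limsup_of_sub hsg cv); move=> [/= Cab [Fsc Ffd]].
  have Lab : Lam xs b.
    have := omL (xs, b); apply.
    exists sg, (fun i => jbar E (sg i)); split; last split.
    + by move=> i; case: (jbar_mem (sg i) hsdE ck).
    + move=> N; exists N => i Ni.
      exact: leq_trans Ni (leq_trans (hsg i) (leq_addr _ _)).
    + exact: (cvg_fst' cv).
  split; first by exists b.
  move=> B [SB _]; apply: SB; exists b; split => //.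
- move=> cj [xs g] hv.
  have := key (u := fun j => (Phi (kbar E j) j, Phi (kbar E j) j.+1)) (y := (xs, g))
    (compact_setX cK1 cK1) _ hv.
  case.
    move=> n; have [h1 h2] := kbar_mem n hsdE cj.
    by split => /=; apply: K1P.
  move=> [[a b] [c d]] [sg [/= e1 e2 hsg cv]]; subst a c.
  have := hj cj _ (limsup_of_sub hsg cv); move=> [/= Dab Gabcd].
  have Lab : Lam xs b.
    have := omL (xs, b); apply.
    exists (fun i => kbar E (sg i)), sg; split; last split.
    + by move=> i; case: (kbar_mem (sg i) hsdE cj).
    + move=> N; exists N => i Ni.
      exact: leq_trans Ni (leq_trans (hsg i) (leq_addl _ _)).
    + exact: (cvg_fst' cv).
  split; first by exists b.
  exists b; split => //.
  by exists (g, d).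
Qed.
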